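(* For fixed $p\in(0,1)$ and every $j\ge0$, $$\lim_{K\to\infty}\frac{\mathbb E(W_j)}{K}=\mathbb Q_j\qquad\text{and}\qquad \lim_{K\to\infty}\frac{\mathbb E(W_j^+)}{K}=\sum_{\ell\ge j}\mathbb Q_\ell .$$
   Context: Uniform urn model. Let $v$ be a random variable with values in the positive integers, let $K\ge 1$, let $v_1,\dots,v_K$ be i.i.d. copies of $v$ and $V=v_1+\dots+v_K$. Fix $p\in(0,1)$, with $pV$ assumed to be an integer. Conditionally on $\{v_1,\dots,v_K\}$, $pV$ balls are drawn with replacement, independently, each drawn ball having color $i$ with probability $v_i/V$. Let $\tilde v_i$ be the number of drawn balls of color $i$; $W_j=\sum_{i=1}^K\mathbf 1\{\tilde v_i=j\}$ and $W_j^+=\sum_{i=1}^K\mathbf 1\{\tilde v_i\ge j\}$. Let $\mathbb Q_j=\mathbb E\big(\frac{(pv)^j}{j!}e^{-pv}\big)$. *)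

(* Defs.v *)
From Stdlib Require Import Reals List Arith ZArith.
Import ListNotations.
Open Scope R_scope.

Definition sumR (l : list R) : R := fold_right Rplus 0 l.
Definition prodR (l : list R) : R := fold_right Rmult 1 l.

Fixpoint all_lists (n : nat) (dom : list nat) : list (list nat) :=
  match n with
  | O => [ [] ]
  | S n' => flat_map (fun x => map (cons x) (all_lists n' dom)) dom
  end.

Definition totV (vs : list nat) : nat := fold_right Nat.add 0%nat vs.

(* number of drawn balls: pV (assumed integer in the paper; we take the
   floor, Int_part x = floor x, which equals pV whenever pV is an integer) *)
Definition ndraws (p : R) (V : nat) : nat := Z.to_nat (Int_part (p * INR V)).

Definition tcount (c : list nat) (i : nat) : nat :=
  length (filter (Nat.eqb i) c).

(* W_j and W_j^+ as functions of the configuration (vs, c);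
   colours are 0, ..., K-1 where K = length vs *)
Definition W (j : nat) (vs c : list nat) : nat :=
  length (filter (fun i => Nat.eqb (tcount c i) j) (seq 0 (length vs))).
Definition Wplus (j : nat) (vs c : list nat) : nat :=
  length (filter (fun i => Nat.leb j (tcount c i)) (seq 0 (length vs))).

(* conditional expectation of f given (v_1,...,v_K) = vs: the pV draws are
   i.i.d., each of colour i with probability v_i / V; we sum over all
   colour sequences c of length pV *)
Definition cond_exp (p : R) (f : list nat -> list nat -> nat) (vs : list nat) : R :=
  let V := totV vs in
  sumR (map (fun c => prodR (map (fun i => INR (nth i vs 0%nat) / INR V) c)
                        * INR (f vs c))
            (all_lists (ndraws p V) (seq 0 (length vs)))).

(* truncated expectation: v_1,...,v_K i.i.d. with law q, restricted to
   values in {1,...,M}; the full expectation is its limit as M -> oo *)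
Definition trunc_exp (q : nat -> R) (p : R) (K M : nat)
  (f : list nat -> list nat -> nat) : R :=
  sumR (map (fun vs => prodR (map q vs) * cond_exp p f vs)
            (all_lists K (seq 1 M))).

Definition is_expect (q : nat -> R) (p : R) (K : nat)
  (f : list nat -> list nat -> nat) (e : R) : Prop :=
  Un_cv (fun M => trunc_exp q p K M f) e.

(* the summand of Q_j = E((p v)^j / j! e^{-p v}) at v = m *)
Definition Qterm (q : nat -> R) (p : R) (j m : nat) : R :=
  q m * ((p * INR m) ^ j / INR (fact j) * exp (- (p * INR m))).

(* Main.v *)
Require Import Defs.
From Stdlib Require Import Reals List Arith ZArith Lra Lia.
Import ListNotations.
Open Scope R_scope.


Lemma sumR_app l1 l2 : sumR (l1 ++ l2) = sumR l1 + sumR l2.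
Proof. induction l1; simpl; [ring| rewrite IHl1; ring]. Qed.

Lemma sumR_plus {A} (f g : A -> R) l :
  sumR (map (fun x => f x + g x) l) = sumR (map f l) + sumR (map g l).
Proof. induction l; simpl; [ring| rewrite IHl; ring]. Qed.

Lemma sumR_scal {A} (a : R) (f : A -> R) l :
  sumR (map (fun x => a * f x) l) = a * sumR (map f l).
Proof. induction l; simpl; [ring| rewrite IHl; ring]. Qed.

Lemma sumR_ext {A} (f g : A -> R) l :
  (forall x, In x l -> f x = g x) -> sumR (map f l) = sumR (map g l).
Proof. induction l; simpl; intros H; [reflexivity|].
  rewrite H by auto. rewrite IHl by auto. reflexivity. Qed.

Lemma sumR_le {A} (f g : A -> R) l :
  (forall x, In x l -> f x <= g x) -> sumR (map f l) <= sumR (map g l).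
Proof. induction l; simpl; intros H; [lra|].
  pose proof (H a (or_introl eq_refl)). assert (sumR (map f l) <= sumR (map g l)) by (apply IHl; intros; apply H; auto). lra. Qed.

Lemma sumR_nonneg {A} (f : A -> R) l :
  (forall x, In x l -> 0 <= f x) -> 0 <= sumR (map f l).
Proof. induction l; simpl; intros H; [lra|].
  pose proof (H a (or_introl eq_refl)). assert (0 <= sumR (map f l)) by (apply IHl; intros; apply H; auto). lra. Qed.

Lemma sumR_swap {A B} (F : A -> B -> R) l1 l2 :
  sumR (map (fun x => sumR (map (fun y => F x y) l2)) l1)
  = sumR (map (fun y => sumR (map (fun x => F x y) l1)) l2).
Proof. induction l1; simpl.
  - induction l2; simpl; [reflexivity| rewrite <- IHl2; ring].
  - rewrite IHl1. rewrite <- sumR_plus. reflexivity. Qed.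

Lemma sumR_flat {A} (F : list A -> R) (L : list (list A)) (dom : list A) :
  sumR (map F (flat_map (fun x => map (cons x) L) dom))
  = sumR (map (fun x => sumR (map (fun c => F (x :: c)) L)) dom).
Proof. induction dom; simpl; [reflexivity|].
  rewrite map_app, sumR_app, IHdom, map_map. reflexivity. Qed.

Lemma prodR_nonneg {A} (w : A -> R) c :
  (forall x, 0 <= w x) -> 0 <= prodR (map w c).
Proof. intros H; induction c; simpl; [lra|]. apply Rmult_le_pos; auto. Qed.

Lemma all_lists_sum_prod (w : nat -> R) n dom :
  sumR (map (fun c => prodR (map w c)) (all_lists n dom)) = (sumR (map w dom)) ^ n.
Proof. induction n; simpl; [ring|].
  rewrite sumR_flat. simpl.
  rewrite (sumR_ext _ (fun x => w x * sumR (map (fun c => prodR (map w c)) (all_lists n dom)))).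
  2:{ intros; rewrite sumR_scal; reflexivity. }
  rewrite IHn. rewrite (sumR_ext _ (fun x => sumR (map w dom) ^ n * w x)) by (intros; ring).
  rewrite sumR_scal. ring. Qed.

Lemma all_lists_in n dom (vs : list nat) :
  In vs (all_lists n dom) -> length vs = n /\ (forall v, In v vs -> In v dom).
Proof. revert vs; induction n; simpl; intros vs H.
  - destruct H as [<-|[]]. simpl; split; [reflexivity| intros v []].
  - apply in_flat_map in H. destruct H as [x [Hx Hin]].
    apply in_map_iff in Hin. destruct Hin as [c [<- Hc]].
    destruct (IHn c Hc) as [H1 H2]. simpl. split; [auto|].
    intros v [<-|Hv]; auto. Qed.

Lemma all_lists_mono n (d1 d2 : list nat) (F : list nat -> R) :
  (forall l, 0 <= F l) ->
  sumR (map F (all_lists n d1)) <= sumR (map F (all_lists n (d1 ++ d2))).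
Proof. revert F; induction n; intros F HF; simpl; [lra|].
  rewrite !sumR_flat. rewrite map_app, sumR_app.
  assert (0 <= sumR (map (fun x => sumR (map (fun c => F (x :: c)) (all_lists n (d1 ++ d2)))) d2)).
  { apply sumR_nonneg. intros. apply sumR_nonneg. auto. }
  assert (sumR (map (fun x => sumR (map (fun c => F (x :: c)) (all_lists n d1))) d1) <=
          sumR (map (fun x => sumR (map (fun c => F (x :: c)) (all_lists n (d1 ++ d2)))) d1)).
  { apply sumR_le. intros. apply (IHn (fun c => F (x :: c))). auto. }
  lra. Qed.

Lemma all_lists_sym (q h : nat -> R) K dom :
  sumR (map (fun vs => prodR (map q vs) * sumR (map h vs)) (all_lists K dom))
  = INR K * (sumR (map q dom)) ^ (pred K) * sumR (map (fun m => q m * h m) dom).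
Proof. induction K; simpl; [ring|].
  rewrite sumR_flat. simpl.
  rewrite (sumR_ext _ (fun x => q x * h x * sumR (map (fun c => prodR (map q c)) (all_lists K dom))
     + q x * sumR (map (fun c => prodR (map q c) * sumR (map h c)) (all_lists K dom)))).
  2:{ intros. rewrite <- !sumR_scal, <- sumR_plus. apply sumR_ext. intros. ring. }
  rewrite sumR_plus, all_lists_sum_prod, IHK.
  rewrite (sumR_ext _ (fun x => (sumR (map q dom) ^ K) * (q x * h x))) by (intros; ring).
  rewrite (sumR_ext (fun x => q x * _) (fun x => (INR K * sumR (map q dom) ^ Init.Nat.pred K *
       sumR (map (fun m : nat => q m * h m) dom)) * q x)) by (intros; ring).
  rewrite !sumR_scal.
  destruct K; simpl; ring. Qed.

Lemma sumR_seq_nth (g : nat -> R) (vs : list nat) :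
  sumR (map (fun i => g (nth i vs 0%nat)) (seq 0 (length vs))) = sumR (map g vs).
Proof. induction vs; simpl; [reflexivity|]. f_equal.
  rewrite <- seq_shift, map_map. simpl. exact IHvs. Qed.

Lemma INR_length_filter {A} (P : A -> bool) l :
  INR (length (filter P l)) = sumR (map (fun x => if P x then 1 else 0) l).
Proof. induction l; simpl; [reflexivity|]. destruct (P a); simpl length; rewrite <- IHl; [rewrite S_INR|]; ring. Qed.

Lemma sumR_seq_indicator (g : nat -> R) i a k :
  sumR (map (fun x => if Nat.eqb i x then g x else 0) (seq a k)) =
  if (andb (Nat.leb a i) (Nat.ltb i (a + k))) then g i else 0.
Proof. revert a; induction k; intros a; simpl.
  - destruct (Nat.leb a i) eqn:E1; destruct (Nat.ltb i (a+0)) eqn:E2; simpl; try reflexivity.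
    apply Nat.leb_le in E1; apply Nat.ltb_lt in E2; lia.
  - rewrite IHk. destruct (Nat.eqb i a) eqn:E.
    + apply Nat.eqb_eq in E; subst.
      replace (Nat.leb (S a) a) with false by (symmetry; apply Nat.leb_gt; lia).
      replace (Nat.leb a a) with true by (symmetry; apply Nat.leb_le; lia).
      replace (Nat.ltb a (a + S k)) with true by (symmetry; apply Nat.ltb_lt; lia). simpl; ring.
    + apply Nat.eqb_neq in E.
      destruct (Nat.leb (S a) i) eqn:E1; destruct (Nat.leb a i) eqn:E3;
      destruct (Nat.ltb i (S a + k)) eqn:E2; destruct (Nat.ltb i (a + S k)) eqn:E4; simpl;
      try ring;
      repeat match goal with H : _ = true |- _ => first [apply Nat.leb_le in H | apply Nat.ltb_lt in H] end;
      repeat match goal with H : _ = false |- _ => first [apply Nat.leb_gt in H | apply Nat.ltb_ge in H] end; lia.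
Qed.


Fixpoint ff (n l : nat) : R := match l with O => 1 | S l' => ff n l' * INR (n - l') end.
Definition Bin n x l := ff n l / INR (fact l) * x ^ l * (1 - x) ^ (n - l).
Fixpoint sumn (f : nat -> R) (n : nat) : R := match n with O => 0 | S n' => sumn f n' + f n' end.

Lemma ff_S n l : ff (S n) (S l) = INR (S n) * ff n l.
Proof. induction l; simpl. - try rewrite Nat.sub_0_r. ring.
  - simpl in IHl. rewrite IHl. ring. Qed.

Lemma ff_big n l : (n < l)%nat -> ff n l = 0.
Proof. induction l; intros H; [lia|]. simpl.
  destruct (Nat.eq_dec n l) as [->|Hne].
  - rewrite Nat.sub_diag. simpl. ring.
  - rewrite IHl by lia. ring. Qed.

Lemma ff_nonneg n l : 0 <= ff n l.
Proof. induction l; simpl; [lra|]. apply Rmult_le_pos; auto. apply pos_INR. Qed.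

Lemma Bin_0 x l : Bin 0 x l = if Nat.eqb 0 l then 1 else 0.
Proof. unfold Bin. destruct l.
  - simpl. field.
  - rewrite ff_big by lia. unfold Rdiv. simpl. ring. Qed.

Lemma Bin_S0 n x : Bin (S n) x 0 = (1 - x) * Bin n x 0.
Proof. unfold Bin. simpl. try rewrite Nat.sub_0_r. field. Qed.

Lemma Bin_SS n x l : Bin (S n) x (S l) = x * Bin n x l + (1 - x) * Bin n x (S l).
Proof. unfold Bin. rewrite ff_S. simpl (ff n (S l)).
  replace (S n - S l)%nat with (n - l)%nat by lia.
  assert (Hf : INR (fact (S l)) = INR (S l) * INR (fact l)) by (rewrite <- mult_INR; reflexivity).
  assert (Hfp : INR (fact l) <> 0) by (apply INR_fact_neq_0).
  assert (HSl : INR (S l) <> 0) by (apply not_0_INR; lia).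
  rewrite Hf.
  destruct (lt_eq_lt_dec l n) as [[Hlt|Heq]|Hgt].
  - destruct (n - l)%nat as [|k] eqn:Ek; [lia|].
    replace (n - S l)%nat with k by lia.
    replace (INR (n - l)) with (INR (S k)) by (rewrite Ek; reflexivity).
    assert (INR (S n) = INR (S l) + INR (S k)) by (rewrite <- plus_INR; f_equal; lia).
    rewrite H. simpl pow. field. split; auto.
  - subst. rewrite Nat.sub_diag. replace (INR 0) with 0 by reflexivity. simpl pow. field. split; auto.
  - rewrite ff_big by lia. unfold Rdiv. ring. Qed.

Lemma Bin_bounds n x l : 0 <= x <= 1 -> 0 <= Bin n x l <= 1.
Proof. intros Hx. revert l; induction n; intros l.
  - rewrite Bin_0. destruct (Nat.eqb 0 l); lra.
  - destruct l.
    + rewrite Bin_S0. specialize (IHn 0%nat). split; [apply Rmult_le_pos|]; try lra.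
      nra.
    + rewrite Bin_SS. pose proof (IHn l). pose proof (IHn (S l)). nra. Qed.

Section Pcalc.
Variable w : nat -> R.
Variable K i : nat.
Hypothesis Hi : (i < K)%nat.
Hypothesis Hw : sumR (map w (seq 0 K)) = 1.

Lemma sum_w_if A Bv :
  sumR (map (fun x => w x * (if Nat.eqb i x then A else Bv)) (seq 0 K)) = w i * A + (1 - w i) * Bv.
Proof.
  rewrite (sumR_ext _ (fun x => Bv * w x + (if Nat.eqb i x then w x * (A - Bv) else 0))).
  2:{ intros x _. destruct (Nat.eqb i x); ring. }
  rewrite sumR_plus, sumR_scal, Hw, sumR_seq_indicator.
  replace (Nat.leb 0 i && Nat.ltb i (0 + K))%bool with true.
  2:{ symmetry. apply andb_true_intro. split; [apply Nat.leb_le; lia| apply Nat.ltb_lt; lia]. }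
  ring. Qed.

Lemma P_eq n l :
  sumR (map (fun c => prodR (map w c) * (if Nat.eqb (tcount c i) l then 1 else 0))
    (all_lists n (seq 0 K))) = Bin n (w i) l.
Proof. revert l; induction n; intros l.
  - simpl. rewrite Bin_0. unfold tcount. simpl. destruct (Nat.eqb 0 l); ring.
  - simpl all_lists. rewrite sumR_flat.
    set (A := sumR (map (fun c => prodR (map w c) * (if Nat.eqb (S (tcount c i)) l then 1 else 0))
         (all_lists n (seq 0 K)))).
    rewrite (sumR_ext _ (fun x => w x * (if Nat.eqb i x then A else
         sumR (map (fun c => prodR (map w c) * (if Nat.eqb (tcount c i) l then 1 else 0))
         (all_lists n (seq 0 K)))))).
    2:{ intros x _. destruct (Nat.eqb i x) eqn:E; unfold A; rewrite <- sumR_scal; apply sumR_ext;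
        intros c _; unfold tcount; simpl; rewrite E; simpl; ring. }
    rewrite sum_w_if, IHn. destruct l.
    + rewrite Bin_S0. unfold A. rewrite (sumR_ext _ (fun c => 0 * prodR (map w c))).
      2:{ intros; simpl; ring. }
      rewrite sumR_scal. ring.
    + rewrite Bin_SS. unfold A. simpl Nat.eqb. rewrite IHn. ring. Qed.

Lemma P_ge n j :
  sumR (map (fun c => prodR (map w c) * (if Nat.leb j (tcount c i) then 1 else 0))
    (all_lists n (seq 0 K))) = 1 - sumn (fun l => Bin n (w i) l) j.
Proof.
  assert (E : forall t, (if Nat.leb j t then 1 else 0) = 1 - sumn (fun l => if Nat.eqb t l then 1 else 0) j).
  { intros t. induction j; cbn [sumn]; [simpl; ring|]. revert IHj.
    destruct (Nat.leb j t) eqn:E1; destruct (Nat.leb (S j) t) eqn:E2; destruct (Nat.eqb t j) eqn:E3;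
    repeat match goal with H : _ = true |- _ => first [apply Nat.leb_le in H | apply Nat.eqb_eq in H] end;
    repeat match goal with H : _ = false |- _ => first [apply Nat.leb_gt in H | apply Nat.eqb_neq in H] end;
    intros; try lia; lra. }
  rewrite (sumR_ext _ (fun c => prodR (map w c) - sumn (fun l => prodR (map w c) * (if Nat.eqb (tcount c i) l then 1 else 0)) j)).
  2:{ intros c _. rewrite E. clear E. induction j; simpl; [ring|]. lra. }
  clear E. induction j.
  - simpl. rewrite (sumR_ext _ (fun c => prodR (map w c))) by (intros; ring).
    rewrite all_lists_sum_prod, Hw, pow1. ring.
  - simpl. rewrite (sumR_ext _ (fun c => (prodR (map w c) - sumn (fun l => prodR (map w c) *
           (if Nat.eqb (tcount c i) l then 1 else 0)) j) + (-1) * (prodR (map w c) * (if Nat.eqb (tcount c i) j then 1 else 0)))) by (intros; ring).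
    rewrite sumR_plus, sumR_scal, IHj, P_eq. ring. Qed.
End Pcalc.

Lemma sumR_INR l : sumR (map INR l) = INR (totV l).
Proof. induction l; simpl; [reflexivity|]. rewrite IHl, plus_INR. ring. Qed.

Lemma totV_ge vs : (forall v, In v vs -> (1 <= v)%nat) -> (length vs <= totV vs)%nat.
Proof. induction vs; simpl; intros H; [lia|].
  assert (1 <= a)%nat by auto. assert (length vs <= totV vs)%nat by auto. lia. Qed.

Lemma weights_sum vs : (0 < totV vs)%nat ->
  sumR (map (fun i => INR (nth i vs 0%nat) / INR (totV vs)) (seq 0 (length vs))) = 1.
Proof. intros H. rewrite (sumR_seq_nth (fun v => INR v / INR (totV vs))).
  rewrite (sumR_ext _ (fun v => / INR (totV vs) * INR v)) by (intros; unfold Rdiv; ring).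
  rewrite sumR_scal, sumR_INR. field. apply not_0_INR. lia. Qed.

Lemma cond_exp_W p j vs : (forall v, In v vs -> (1 <= v)%nat) ->
  cond_exp p (W j) vs =
  sumR (map (fun v => Bin (ndraws p (totV vs)) (INR v / INR (totV vs)) j) vs).
Proof.
  intros Hv. unfold cond_exp, W.
  set (w := fun i => INR (nth i vs 0%nat) / INR (totV vs)).
  set (n := ndraws p (totV vs)).
  rewrite (sumR_ext _ (fun c => sumR (map (fun i => prodR (map w c) * (if Nat.eqb (tcount c i) j then 1 else 0)) (seq 0 (length vs))))).
  2:{ intros c _. rewrite INR_length_filter, <- sumR_scal. apply sumR_ext; intros; ring. }
  rewrite sumR_swap.
  rewrite <- (sumR_seq_nth (fun v => Bin n (INR v / INR (totV vs)) j)).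
  apply sumR_ext. intros i Hi. apply in_seq in Hi.
  apply (P_eq w (length vs) i). lia.
  apply weights_sum. pose proof (totV_ge vs Hv). lia.
Qed.

Lemma cond_exp_Wplus p j vs : (forall v, In v vs -> (1 <= v)%nat) ->
  cond_exp p (Wplus j) vs =
  sumR (map (fun v => 1 - sumn (fun l => Bin (ndraws p (totV vs)) (INR v / INR (totV vs)) l) j) vs).
Proof.
  intros Hv. unfold cond_exp, Wplus.
  set (w := fun i => INR (nth i vs 0%nat) / INR (totV vs)).
  set (n := ndraws p (totV vs)).
  rewrite (sumR_ext _ (fun c => sumR (map (fun i => prodR (map w c) * (if Nat.leb j (tcount c i) then 1 else 0)) (seq 0 (length vs))))).
  2:{ intros c _. rewrite INR_length_filter, <- sumR_scal. apply sumR_ext; intros; ring. }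
  rewrite sumR_swap.
  rewrite <- (sumR_seq_nth (fun v => 1 - sumn (fun l => Bin n (INR v / INR (totV vs)) l) j)).
  apply sumR_ext. intros i Hi. apply in_seq in Hi.
  apply (P_ge w (length vs) i). lia.
  apply weights_sum. pose proof (totV_ge vs Hv). lia.
Qed.

Lemma cond_exp_nonneg p f vs : 0 <= cond_exp p f vs.
Proof. unfold cond_exp. apply sumR_nonneg. intros c _. apply Rmult_le_pos; [|apply pos_INR].
  apply prodR_nonneg. intros x. destruct (totV vs) eqn:E.
  - simpl. unfold Rdiv. rewrite Rinv_0. lra.
  - apply Rle_mult_inv_pos; [apply pos_INR| apply lt_0_INR; lia]. Qed.


Definition pois (p : R) (m l : nat) := (p * INR m) ^ l / INR (fact l) * exp (- (p * INR m)).

Lemma cv_ev (u v : nat -> R) l N : (forall n, (n >= N)%nat -> u n = v n) -> Un_cv v l -> Un_cv u l.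
Proof. intros H Hv e He. destruct (Hv e He) as [N1 HN1]. exists (max N N1). intros n Hn.
  rewrite H by lia. apply HN1. lia. Qed.

Lemma cv_const c : Un_cv (fun _ => c) c.
Proof. intros e He. exists 0%nat. intros. unfold R_dist. rewrite Rminus_diag, Rabs_R0. lra. Qed.

Lemma cv_shift (u : nat -> R) l : Un_cv (fun n => u (S n)) l -> Un_cv u l.
Proof. intros H e He. destruct (H e He) as [N HN]. exists (S N). intros n Hn.
  destruct n; [lia|]. apply HN. lia. Qed.

Lemma cv_err (u : nat -> R) l c N0 :
  (forall V, (V >= N0)%nat -> (V >= 1)%nat -> Rabs (u V - l) <= c / INR V) -> Un_cv u l.
Proof. intros H e He. destruct (INR_archimed e (Rabs c) He) as [n Hn].
  exists (max (max n 1) N0). intros V HV. unfold R_dist.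
  assert (HV1 : (V >= 1)%nat) by lia.
  assert (HVp : 0 < INR V) by (apply lt_0_INR; lia).
  assert (INR n <= INR V) by (apply le_INR; lia).
  eapply Rle_lt_trans; [apply H; lia|].
  apply (Rmult_lt_reg_r (INR V)); auto. unfold Rdiv. rewrite Rmult_assoc, Rinv_l by lra.
  assert (c <= Rabs c) by apply Rle_abs. nra. Qed.

Lemma squeeze (a b c : nat -> R) l N :
  (forall n, (n >= N)%nat -> a n <= b n <= c n) -> Un_cv a l -> Un_cv c l -> Un_cv b l.
Proof. intros H Ha Hc e He. destruct (Ha e He) as [N1 H1]. destruct (Hc e He) as [N2 H2].
  exists (max N (max N1 N2)). intros n Hn. specialize (H n ltac:(lia)).
  specialize (H1 n ltac:(lia)). specialize (H2 n ltac:(lia)). unfold R_dist in *.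
  apply Rabs_def2 in H1. apply Rabs_def2 in H2. apply Rabs_def1; lra. Qed.

Lemma cv_opp (u : nat -> R) l : Un_cv u l -> Un_cv (fun n => - u n) (- l).
Proof. intros H e He. destruct (H e He) as [N HN]. exists N. intros n Hn.
  unfold R_dist in *. replace (- u n - - l) with (- (u n - l)) by ring. rewrite Rabs_Ropp. auto. Qed.

Section P.
Variable p : R.
Hypothesis hp : 0 < p < 1.

Lemma ndraws_bd V : p * INR V - 1 < INR (ndraws p V) <= p * INR V.
Proof. unfold ndraws. destruct (base_Int_part (p * INR V)) as [H1 H2].
  assert (0 <= p * INR V) by (apply Rmult_le_pos; [lra| apply pos_INR]).
  assert (Hz : (0 <= Int_part (p * INR V))%Z).
  { apply le_IZR. assert (IZR (Int_part (p * INR V)) > -1) by lra.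
    destruct (Z_lt_le_dec (Int_part (p * INR V)) 0) as [Hlt|Hle]; [|apply IZR_le; auto].
    assert (H4 : (Int_part (p * INR V) <= -1)%Z) by lia.
    apply IZR_le in H4. lra. }
  rewrite (INR_IZR_INZ (Z.to_nat _)). rewrite Z2Nat.id by exact Hz. lra. Qed.

Lemma INR_sub_bd n l : INR n - INR l <= INR (n - l) <= INR n.
Proof. destruct (le_lt_dec l n).
  - rewrite minus_INR by auto. pose proof (pos_INR l). lra.
  - replace (n - l)%nat with 0%nat by lia. simpl. assert (INR n < INR l) by (apply lt_INR; auto).
    pose proof (pos_INR n). lra. Qed.

Lemma cv_ratio (a : nat -> R) c : (forall V, Rabs (a V - p * INR V) <= c) ->
  Un_cv (fun V => a V / INR V) p.
Proof. intros H. apply (cv_err _ _ c 1). intros V _ HV.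
  assert (HVp : 0 < INR V) by (apply lt_0_INR; lia).
  replace (a V / INR V - p) with ((a V - p * INR V) / INR V) by (field; lra).
  unfold Rdiv. rewrite Rabs_mult, Rabs_inv, (Rabs_right (INR V)) by lra.
  apply Rmult_le_compat_r; [left; apply Rinv_0_lt_compat; lra| auto]. Qed.

Lemma nsub_bd l V : Rabs (INR (ndraws p V - l) - p * INR V) <= INR l + 1.
Proof. pose proof (INR_sub_bd (ndraws p V) l). pose proof (ndraws_bd V). pose proof (pos_INR l).
  apply Rabs_le. lra. Qed.

Lemma ffx m l : Un_cv (fun V => ff (ndraws p V) l * (INR m / INR V) ^ l) ((p * INR m) ^ l).
Proof. induction l.
  - simpl. apply (cv_ev _ (fun _ => 1) 1 0); [intros; ring| apply cv_const].
  - apply (cv_ev _ (fun V => (ff (ndraws p V) l * (INR m / INR V) ^ l) * (INR (ndraws p V - l) / INR V * INR m)) _ 0).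
    { intros; simpl; unfold Rdiv; ring. }
    replace ((p * INR m) ^ S l) with ((p * INR m) ^ l * (p * INR m)) by (simpl; ring).
    apply CV_mult; auto. apply CV_mult; [| apply cv_const].
    apply (cv_ratio _ (INR l + 1)). intros; apply nsub_bd. Qed.

Lemma pow_exp_ln y k : 0 < y -> y ^ k = exp (INR k * ln y).
Proof. intros Hy. induction k.
  - simpl. rewrite Rmult_0_l, exp_0. reflexivity.
  - rewrite S_INR, Rmult_plus_distr_r, exp_plus, <- IHk, Rmult_1_l, exp_ln by auto. simpl. ring. Qed.

Lemma exp_le_inv x y : exp x <= exp y -> x <= y.
Proof. intros H. destruct (Rle_lt_dec x y); auto. apply exp_increasing in r. lra. Qed.

Lemma ln_bounds t : 0 <= t < 1 -> - t / (1 - t) <= ln (1 - t) <= - t.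
Proof. intros Ht. split.
  - apply exp_le_inv. rewrite exp_ln by lra.
    pose proof (exp_ineq1_le (t / (1 - t))).
    replace (- t / (1 - t)) with (- (t / (1 - t))) by (field; lra).
    rewrite exp_Ropp. pose proof (exp_pos (t / (1 - t))).
    replace (1 + t / (1 - t)) with (/ (1 - t)) in H by (field; lra).
    apply (Rmult_le_reg_l (exp (t / (1 - t)))); auto. rewrite Rinv_r by lra.
    apply (Rmult_le_reg_r (/ (1 - t))). apply Rinv_0_lt_compat; lra.
    rewrite Rmult_assoc, Rinv_r by lra. lra.
  - apply exp_le_inv. rewrite exp_ln by lra. pose proof (exp_ineq1_le (- t)). lra. Qed.

Lemma powx_cv m (k : nat -> nat) c : (forall V, Rabs (INR (k V) - p * INR V) <= c) ->
  Un_cv (fun V => (1 - INR m / INR V) ^ (k V)) (exp (- (p * INR m))).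
Proof. intros Hk.
  set (t := fun V => INR m / INR V).
  assert (Ht : forall V, (V >= S m)%nat -> 0 <= t V < 1 /\ 0 < INR V).
  { intros V HV. assert (INR (S m) <= INR V) by (apply le_INR; lia). rewrite S_INR in H.
    pose proof (pos_INR m). unfold t. split; [split|lra].
    - apply Rle_mult_inv_pos; lra.
    - apply (Rmult_lt_reg_r (INR V)); [lra|]. unfold Rdiv. rewrite Rmult_assoc, Rinv_l by lra. lra. }
  apply (cv_ev _ (fun V => exp (INR (k V) * ln (1 - t V))) _ (S m)).
  { intros V HV. apply pow_exp_ln. destruct (Ht V HV). lra. }
  apply continuity_seq. { apply derivable_continuous. apply derivable_exp. }
  assert (Hkr : Un_cv (fun V => INR (k V) / INR V) p) by (apply (cv_ratio _ c); auto).
  assert (HU : Un_cv (fun V => - (INR (k V) / INR V * INR m)) (- (p * INR m))).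
  { apply cv_opp. apply CV_mult; auto. apply cv_const. }
  assert (Hinv : Un_cv (fun V => / (1 - t V)) 1).
  { apply (cv_err _ _ (2 * INR m) (S (2 * m))). intros V HV _.
    assert (INR (S (2 * m)) <= INR V) by (apply le_INR; lia).
    rewrite S_INR, mult_INR in H. simpl (INR 2) in H. pose proof (pos_INR m).
    assert (HV0 : 0 < INR V) by lra.
    unfold t. replace (/ (1 - INR m / INR V) - 1) with (INR m / (INR V - INR m)) by (field; lra).
    rewrite Rabs_right. 2:{ apply Rle_ge, Rle_mult_inv_pos; lra. }
    unfold Rdiv. apply (Rmult_le_reg_r (INR V * (INR V - INR m))). nra.
    replace (INR m * / (INR V - INR m) * (INR V * (INR V - INR m))) with (INR m * INR V) by (field; lra).
    replace (2 * INR m * / INR V * (INR V * (INR V - INR m))) with (2 * INR m * (INR V - INR m)) by (field; lra).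
    nra. }
  apply (squeeze (fun V => - (INR (k V) / INR V * INR m) * / (1 - t V)) _
    (fun V => - (INR (k V) / INR V * INR m)) _ (S m)); auto.
  - intros V HV. destruct (Ht V HV) as [Ht1 HV0]. pose proof (ln_bounds _ Ht1). pose proof (pos_INR (k V)).
    replace (- (INR (k V) / INR V * INR m) * / (1 - t V)) with (INR (k V) * (- t V / (1 - t V))).
    2:{ unfold t. field. split; [lra|]. unfold t in Ht1. intro. 
        assert (INR m < INR V) by (apply lt_INR; lia). lra. }
    replace (- (INR (k V) / INR V * INR m)) with (INR (k V) * (- t V)) by (unfold t; field; lra).
    split; apply Rmult_le_compat_l; lra.
  - replace (- (p * INR m)) with (- (p * INR m) * 1) by ring. apply CV_mult; auto. Qed.

Lemma Bin_cv m l : Un_cv (fun V => Bin (ndraws p V) (INR m / INR V) l) (pois p m l).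
Proof. unfold Bin, pois.
  apply (cv_ev _ (fun V => (ff (ndraws p V) l * (INR m / INR V) ^ l) * / INR (fact l) *
      (1 - INR m / INR V) ^ (ndraws p V - l)) _ 0). { intros; unfold Rdiv; ring. }
  replace ((p * INR m) ^ l / INR (fact l) * exp (- (p * INR m))) with
    ((p * INR m) ^ l * / INR (fact l) * exp (- (p * INR m))) by (unfold Rdiv; ring).
  apply CV_mult; [apply CV_mult; [apply ffx| apply cv_const]|].
  apply (powx_cv m (fun V => (ndraws p V - l)%nat) (INR l + 1)). intros; apply nsub_bd. Qed.

Lemma sumn_sum_f f N : sumn f (S N) = sum_f_R0 f N.
Proof. induction N; simpl; [ring|]. simpl in IHN. rewrite <- IHN. ring. Qed.

Lemma exp_series x : Un_cv (fun N => sum_f_R0 (fun i => / INR (fact i) * x ^ i) N) (exp x).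
Proof. exact (proj2_sig (exist_exp x)). Qed.

Lemma pois_nonneg m l : 0 <= pois p m l.
Proof. unfold pois. pose proof (exp_pos (- (p * INR m))).
  assert (0 <= p * INR m) by (apply Rmult_le_pos; [lra| apply pos_INR]).
  apply Rmult_le_pos; [|lra]. apply Rle_mult_inv_pos; [apply pow_le; auto| apply INR_fact_lt_0]. Qed.

Lemma sumn_pois m j : sumn (pois p m) j = exp (- (p * INR m)) * sumn (fun i => / INR (fact i) * (p * INR m) ^ i) j.
Proof. induction j; simpl; [ring|]. rewrite IHj. unfold pois, Rdiv. ring. Qed.

Lemma pois_sumn_le m j : sumn (pois p m) j <= 1.
Proof. rewrite sumn_pois. destruct j; [simpl; lra|]. rewrite sumn_sum_f.
  assert (0 <= p * INR m) by (apply Rmult_le_pos; [lra| apply pos_INR]).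
  set (x := p * INR m) in *.
  assert (sum_f_R0 (fun i => / INR (fact i) * x ^ i) j <= exp x).
  { apply (growing_ineq (fun N => sum_f_R0 (fun i => / INR (fact i) * x ^ i) N)); [|apply exp_series].
    intros N. rewrite tech5. match goal with |- ?a <= ?a + ?b => assert (0 <= b); [|lra] end.
    apply Rmult_le_pos; [left; apply Rinv_0_lt_compat, (INR_fact_lt_0 (S N))| apply (pow_le x (S N)); auto]. }
  pose proof (exp_pos (- x)). rewrite exp_Ropp in *.
  apply (Rmult_le_reg_l (exp x)); [apply exp_pos|].
  rewrite <- Rmult_assoc, Rinv_r by (pose proof (exp_pos x); lra). lra. Qed.

Lemma pois_sumn_cv m : Un_cv (fun N => sumn (pois p m) N) 1.
Proof. apply cv_shift.
  apply (cv_ev _ (fun N => exp (- (p * INR m)) * sum_f_R0 (fun i => / INR (fact i) * (p * INR m) ^ i) N) _ 0).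
  { intros; rewrite sumn_pois, sumn_sum_f; reflexivity. }
  replace 1 with (exp (- (p * INR m)) * exp (p * INR m)).
  2:{ rewrite <- exp_plus. replace (- (p * INR m) + p * INR m) with 0 by ring. apply exp_0. }
  apply CV_mult; [apply cv_const| apply exp_series]. Qed.

End P.


Lemma sumR_abs_le {X} (f g : X -> R) l :
  (forall x, In x l -> Rabs (f x) <= g x) -> Rabs (sumR (map f l)) <= sumR (map g l).
Proof. induction l; simpl; intros H.
  - rewrite Rabs_R0; lra.
  - eapply Rle_trans; [apply Rabs_triang|]. apply Rplus_le_compat; auto. Qed.

Lemma sumR_const_bd {X} (f : X -> R) l C :
  (forall x, In x l -> Rabs (f x) <= C) -> Rabs (sumR (map f l)) <= INR (length l) * C.
Proof. intros H. eapply Rle_trans; [apply (sumR_abs_le f (fun _ => C)); auto|].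
  clear H. induction l; simpl sumR; simpl length; [simpl; lra|]. rewrite S_INR. lra. Qed.

Lemma sumR_minus {X} (f g : X -> R) l :
  sumR (map f l) - sumR (map g l) = sumR (map (fun x => f x - g x) l).
Proof. induction l; simpl; [ring|]. rewrite <- IHl. ring. Qed.

Lemma in_totV v vs : In v vs -> (v <= totV vs)%nat.
Proof. induction vs; simpl; [tauto|]. intros [->|H]; [lia|]. specialize (IHvs H). lia. Qed.

Lemma sumR_seq0 f M : sumR (map f (seq 0 (S M))) = sum_f_R0 f M.
Proof. induction M; [simpl; ring|]. rewrite seq_S, map_app, sumR_app, IHM. simpl. ring. Qed.

Lemma sumR_seq1 f M : sumR (map f (seq 1 M)) = sum_f_R0 f M - f 0%nat.
Proof. rewrite <- sumR_seq0. simpl. ring. Qed.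

Lemma lim_le (u v : nat -> R) a b B : Un_cv u a -> Un_cv v b -> (forall n, Rabs (u n - v n) <= B) ->
  Rabs (a - b) <= B.
Proof. intros Hu Hv H. destruct (Rle_lt_dec (Rabs (a - b)) B) as [|Hlt]; auto. exfalso.
  set (e := (Rabs (a - b) - B) / 2). assert (He : e > 0) by (unfold e; lra).
  destruct (Hu e He) as [N1 H1]. destruct (Hv e He) as [N2 H2].
  specialize (H1 (max N1 N2) ltac:(lia)). specialize (H2 (max N1 N2) ltac:(lia)).
  specialize (H (max N1 N2)). unfold R_dist in *.
  assert (Rabs (a - b) <= Rabs (a - u (max N1 N2)) + Rabs (u (max N1 N2) - v (max N1 N2)) + Rabs (v (max N1 N2) - b)).
  { replace (a - b) with ((a - u (max N1 N2)) + (u (max N1 N2) - v (max N1 N2)) + (v (max N1 N2) - b)) at 1 by ring.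
    eapply Rle_trans; [apply Rabs_triang|]. apply Rplus_le_compat_r. apply Rabs_triang. }
  rewrite Rabs_minus_sym in H1. unfold e in *. lra. Qed.

Lemma cv_pow (u : nat -> R) l k : Un_cv u l -> Un_cv (fun n => u n ^ k) (l ^ k).
Proof. intros H. induction k; simpl.
  - apply cv_const.
  - apply CV_mult; auto. Qed.

Lemma unif_fin (u : nat -> nat -> R) (phi : nat -> R) N e : e > 0 ->
  (forall m, (1 <= m)%nat -> Un_cv (fun V => u V m) (phi m)) ->
  exists V0, forall V m, (V >= V0)%nat -> (1 <= m <= N)%nat -> Rabs (u V m - phi m) < e.
Proof. intros He H. induction N.
  - exists 0%nat. intros; lia.
  - destruct IHN as [V1 H1]. destruct (H (S N) ltac:(lia) e He) as [V2 H2].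
    exists (max V1 V2). intros V m HV Hm. destruct (Nat.eq_dec m (S N)) as [->|].
    + apply H2. lia.
    + apply H1; lia. Qed.

Lemma pow_le1 x k : 0 <= x <= 1 -> x ^ k <= 1.
Proof. intros H. induction k; simpl; [lra|]. pose proof (pow_le x k ltac:(lra)). nra. Qed.

Section Main.
Variable q : nat -> R.
Hypothesis hq_nonneg : forall m, 0 <= q m.
Hypothesis hq0 : q 0%nat = 0.
Hypothesis hq_sum : infinite_sum q 1.

Lemma q_growing : Un_growing (fun M => sum_f_R0 q M).
Proof. intros M. simpl. pose proof (hq_nonneg (S M)). lra. Qed.

Lemma q_partial_le M : sum_f_R0 q M <= 1.
Proof. apply (growing_ineq _ 1 q_growing hq_sum). Qed.

Lemma A_le M : 0 <= sumR (map q (seq 1 M)) <= 1.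
Proof. split. apply sumR_nonneg; auto. rewrite sumR_seq1, hq0. pose proof (q_partial_le M). lra. Qed.

Lemma A_cv : Un_cv (fun M => sumR (map q (seq 1 M))) 1.
Proof. apply (cv_ev _ (fun M => sum_f_R0 q M) _ 0). { intros; rewrite sumR_seq1, hq0; ring. } exact hq_sum. Qed.

Lemma tail_bd N M : sumR (map (fun m => if Nat.leb m N then 0 else q m) (seq 1 M)) <= 1 - sum_f_R0 q N.
Proof.
  assert (H1 : sumR (map (fun m => if Nat.leb m N then 0 else q m) (seq 1 M)) <=
               sumR (map (fun m => if Nat.leb m N then 0 else q m) (seq 1 (N + M)))).
  { replace (N + M)%nat with (M + N)%nat by lia. rewrite seq_app, map_app, sumR_app.
    assert (0 <= sumR (map (fun m => if Nat.leb m N then 0 else q m) (seq (1 + M) N))); [|lra].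
    apply sumR_nonneg. intros x _. destruct (Nat.leb x N); [lra| auto]. }
  rewrite seq_app, map_app, sumR_app in H1.
  rewrite (sumR_ext _ (fun _ => 0 * 0) (seq 1 N)) in H1.
  2:{ intros x Hx. apply in_seq in Hx. replace (Nat.leb x N) with true by (symmetry; apply Nat.leb_le; lia). ring. }
  rewrite sumR_scal in H1.
  rewrite (sumR_ext _ q (seq (1 + N) M)) in H1.
  2:{ intros x Hx. apply in_seq in Hx. replace (Nat.leb x N) with false by (symmetry; apply Nat.leb_gt; lia). ring. }
  pose proof (A_le (N + M)). rewrite seq_app, map_app, sumR_app in H.
  rewrite sumR_seq1, hq0 in H. lra. Qed.

Lemma tail_small d : d > 0 -> exists N, 1 - sum_f_R0 q N < d.
Proof. intros Hd. destruct (hq_sum d Hd) as [N HN]. exists N. specialize (HN N (le_n _)).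
  unfold R_dist in HN. apply Rabs_def2 in HN. lra. Qed.

Variable p : R.
Variable f : list nat -> list nat -> nat.
Variable psi : nat -> nat -> R.
Variable phi : nat -> R.
Variable C : R.
Variable Phi : R.
Hypothesis Hpsi : forall V m, (m <= V)%nat -> Rabs (psi V m) <= C.
Hypothesis Hphi : forall m, Rabs (phi m) <= C.
Hypothesis Hcond : forall vs, (forall v, In v vs -> (1 <= v)%nat) ->
  cond_exp p f vs = sumR (map (fun v => psi (totV vs) v) vs).
Hypothesis Hcv : forall m, (1 <= m)%nat -> Un_cv (fun V => psi V m) (phi m).
Hypothesis HPhi : infinite_sum (fun m => q m * phi m) Phi.

Lemma C_nonneg : 0 <= C.
Proof. pose proof (Hphi 0%nat). pose proof (Rabs_pos (phi 0%nat)). lra. Qed.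

Lemma in_dom K M vs : In vs (all_lists K (seq 1 M)) -> length vs = K /\ (forall v, In v vs -> (1 <= v)%nat).
Proof. intros H. apply all_lists_in in H. destruct H as [H1 H2]. split; auto.
  intros v Hv. apply H2 in Hv. apply in_seq in Hv. lia. Qed.

Lemma trunc_eq K M : trunc_exp q p K M f =
  sumR (map (fun vs => prodR (map q vs) * sumR (map (fun v => psi (totV vs) v) vs)) (all_lists K (seq 1 M))).
Proof. unfold trunc_exp. apply sumR_ext. intros vs Hvs. rewrite Hcond; auto. apply (in_dom K M vs Hvs). Qed.

Lemma trunc_growing K : Un_growing (fun M => trunc_exp q p K M f).
Proof. intros M. unfold trunc_exp. rewrite seq_S. apply all_lists_mono.
  intros l. apply Rmult_le_pos; [apply prodR_nonneg; auto| apply cond_exp_nonneg]. Qed.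

Lemma trunc_ub K : has_ub (fun M => trunc_exp q p K M f).
Proof. exists (INR K * C). intros x [M ->]. rewrite trunc_eq.
  eapply Rle_trans. apply (sumR_le _ (fun vs => (INR K * C) * prodR (map q vs))).
  { intros vs Hvs. destruct (in_dom K M vs Hvs) as [Hl Hv].
    pose proof (sumR_const_bd (fun v => psi (totV vs) v) vs C) as Hb.
    assert (Rabs (sumR (map (fun v : nat => psi (totV vs) v) vs)) <= INR (length vs) * C).
    { apply Hb. intros v Hin. apply Hpsi. apply in_totV; auto. }
    rewrite Hl in H. pose proof (prodR_nonneg q vs hq_nonneg).
    rewrite Rmult_comm. apply Rmult_le_compat_r; auto. pose proof (Rle_abs (sumR (map (fun v : nat => psi (totV vs) v) vs))). lra. }
  rewrite sumR_scal, all_lists_sum_prod.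
  pose proof (A_le M). pose proof C_nonneg. pose proof (pos_INR K).
  assert (sumR (map q (seq 1 M)) ^ K <= 1) by (apply pow_le1; lra).
  assert (0 <= INR K * C) by (apply Rmult_le_pos; auto). nra. Qed.

Theorem main_gen : exists EW : nat -> R,
  (forall K, is_expect q p K f (EW K)) /\ Un_cv (fun K => EW (S K) / INR (S K)) Phi.
Proof.
  exists (fun K => proj1_sig (growing_cv _ (trunc_growing K) (trunc_ub K))).
  split. { intros K. unfold is_expect. exact (proj2_sig (growing_cv _ (trunc_growing K) (trunc_ub K))). }
  intros e He.
  set (eta := e / (2 * (1 + 2 * C))).
  pose proof C_nonneg as HC.
  assert (Heta : eta > 0) by (unfold eta; apply Rdiv_lt_0_compat; lra).
  destruct (tail_small eta Heta) as [N HN].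
  destruct (unif_fin psi phi N eta Heta Hcv) as [V0 HV0].
  exists V0. intros K HK. unfold R_dist.
  set (EWK := proj1_sig (growing_cv _ (trunc_growing (S K)) (trunc_ub (S K)))).
  assert (HEW : Un_cv (fun M => trunc_exp q p (S K) M f) EWK) by exact (proj2_sig (growing_cv _ (trunc_growing (S K)) (trunc_ub (S K)))).
  change (Rabs (EWK / INR (S K) - Phi) < e).
  set (T := fun M => sumR (map (fun vs => prodR (map q vs) * sumR (map phi vs)) (all_lists (S K) (seq 1 M)))).
  assert (HT : Un_cv T (INR (S K) * Phi)).
  { apply (cv_ev _ (fun M => INR (S K) * sumR (map q (seq 1 M)) ^ K * sum_f_R0 (fun m => q m * phi m) M) _ 0).
    { intros M _. unfold T. rewrite all_lists_sym, (sumR_seq1 (fun m => q m * phi m)), hq0. simpl pred. ring. }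
    replace (INR (S K) * Phi) with (INR (S K) * 1 ^ K * Phi) by (rewrite pow1; ring).
    apply CV_mult; [apply CV_mult; [apply cv_const| apply cv_pow, A_cv]| exact HPhi]. }
  assert (Hbd : forall M, Rabs (trunc_exp q p (S K) M f - T M) <= INR (S K) * (eta + 2 * C * eta)).
  { intros M. rewrite trunc_eq. unfold T.
    rewrite sumR_minus.
    rewrite (sumR_ext _ (fun vs => prodR (map q vs) * sumR (map (fun v => psi (totV vs) v - phi v) vs))).
    2:{ intros vs _. rewrite <- Rmult_minus_distr_l, sumR_minus. reflexivity. }
    set (h := fun v : nat => if Nat.leb v N then eta else 2 * C).
    eapply Rle_trans. apply (sumR_abs_le _ (fun vs => prodR (map q vs) * sumR (map h vs))).
    { intros vs Hvs. destruct (in_dom _ _ vs Hvs) as [Hl Hv].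
      pose proof (prodR_nonneg q vs hq_nonneg).
      rewrite Rabs_mult, (Rabs_right (prodR _)) by lra. apply Rmult_le_compat_l; auto.
      apply sumR_abs_le. intros v Hin. unfold h.
      assert (HvV : (v <= totV vs)%nat) by (apply in_totV; auto).
      destruct (Nat.leb v N) eqn:E.
      - apply Nat.leb_le in E. left. apply HV0; [| split; auto].
        pose proof (totV_ge vs Hv). lia.
      - eapply Rle_trans; [apply Rabs_triang|]. rewrite Rabs_Ropp.
        pose proof (Hpsi _ _ HvV). pose proof (Hphi v). lra. }
    rewrite all_lists_sym. simpl pred.
    assert (Hs : sumR (map (fun m => q m * h m) (seq 1 M)) <= eta + 2 * C * eta).
    { eapply Rle_trans. apply (sumR_le _ (fun m => eta * q m + 2 * C * (if Nat.leb m N then 0 else q m))).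
      { intros m _. unfold h. destruct (Nat.leb m N); pose proof (hq_nonneg m); nra. }
      rewrite sumR_plus, !sumR_scal. pose proof (A_le M). pose proof (tail_bd N M).
      assert (eta * sumR (map q (seq 1 M)) <= eta) by nra.
      assert (2 * C * sumR (map (fun m => if Nat.leb m N then 0 else q m) (seq 1 M)) <= 2 * C * eta) by nra.
      lra. }
    pose proof (A_le M). assert (sumR (map q (seq 1 M)) ^ K <= 1) by (apply pow_le1; lra).
    assert (0 <= sumR (map q (seq 1 M)) ^ K) by (apply pow_le; lra).
    assert (0 <= sumR (map (fun m => q m * h m) (seq 1 M))).
    { apply sumR_nonneg. intros m _. unfold h. apply Rmult_le_pos; auto. destruct (Nat.leb m N); lra. }
    pose proof (pos_INR (S K)).
    assert (sumR (map q (seq 1 M)) ^ K * sumR (map (fun m => q m * h m) (seq 1 M)) <= eta + 2 * C * eta) by nra.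
    nra. }
  pose proof (lim_le _ _ _ _ _ HEW HT Hbd) as Hl.
  assert (HSK : 0 < INR (S K)) by (apply lt_0_INR; lia).
  replace (EWK / INR (S K) - Phi) with ((EWK - INR (S K) * Phi) / INR (S K)) by (field; lra).
  unfold Rdiv. rewrite Rabs_mult, Rabs_inv, (Rabs_right (INR (S K))) by lra.
  apply (Rmult_lt_reg_r (INR (S K))); auto. rewrite Rmult_assoc, Rinv_l by lra.
  assert (eta + 2 * C * eta < e).
  { unfold eta. replace (e / (2 * (1 + 2 * C)) + 2 * C * (e / (2 * (1 + 2 * C)))) with (e / 2) by (field; lra). lra. }
  nra.
Qed.
End Main.


Lemma inf_sum_ext a b l : (forall m, a m = b m) -> infinite_sum a l -> infinite_sum b l.
Proof. intros H Ha. apply (cv_ev _ (fun N => sum_f_R0 a N) _ 0); auto.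
  intros N _. apply sum_eq. intros; auto. Qed.

Lemma inf_sum_plus a b la lb : infinite_sum a la -> infinite_sum b lb ->
  infinite_sum (fun m => a m + b m) (la + lb).
Proof. intros Ha Hb. apply (cv_ev _ (fun N => sum_f_R0 a N + sum_f_R0 b N) _ 0).
  { intros; apply sum_plus. } apply CV_plus; auto. Qed.

Lemma inf_sum_minus a b la lb : infinite_sum a la -> infinite_sum b lb ->
  infinite_sum (fun m => a m - b m) (la - lb).
Proof. intros Ha Hb. apply (cv_ev _ (fun N => sum_f_R0 a N - sum_f_R0 b N) _ 0).
  { intros; apply minus_sum. } apply CV_minus; auto. Qed.

Lemma inf_sum_zero : infinite_sum (fun _ => 0) 0.
Proof. apply (cv_ev _ (fun _ => 0) _ 0). { intros N _. induction N; simpl; [reflexivity| rewrite IHN; ring]. }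
  apply cv_const. Qed.

Lemma cv_shift_inv (u : nat -> R) l : Un_cv u l -> Un_cv (fun n => u (S n)) l.
Proof. intros H e He. destruct (H e He) as [N HN]. exists N. intros n Hn. apply HN. lia. Qed.

Lemma cv_shift_add (u : nat -> R) l j : Un_cv u l -> Un_cv (fun n => u (j + n)%nat) l.
Proof. intros H e He. destruct (H e He) as [N HN]. exists N. intros n Hn. apply HN. lia. Qed.

Lemma sumn_shift f j L : sumn f (j + L) = sumn f j + sumn (fun l => f (j + l)%nat) L.
Proof. induction L; simpl. - rewrite Nat.add_0_r. ring. - rewrite Nat.add_succ_r. simpl. rewrite IHL. ring. Qed.

Lemma cv_sumn (g : nat -> nat -> R) h j : (forall l, Un_cv (fun V => g V l) (h l)) ->
  Un_cv (fun V => sumn (g V) j) (sumn h j).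
Proof. intros H. induction j; simpl. - apply cv_const. - apply CV_plus; auto. Qed.

Lemma sumn_abs_bd f j : (forall l, Rabs (f l) <= 1) -> Rabs (sumn f j) <= INR j.
Proof. intros H. induction j; simpl sumn. - rewrite Rabs_R0. simpl; lra.
  - rewrite S_INR. eapply Rle_trans; [apply Rabs_triang|]. pose proof (H j). lra. Qed.

Section DCT.
Variable q : nat -> R.
Hypothesis hq_nonneg : forall m, 0 <= q m.
Hypothesis hq0 : q 0%nat = 0.
Hypothesis hq_sum : infinite_sum q 1.

Lemma dct (g : nat -> nat -> R) (s : nat -> R) :
  (forall L m, 0 <= g L m <= 1) -> (forall m, Un_cv (fun L => g L m) 0) ->
  (forall L, infinite_sum (fun m => q m * g L m) (s L)) -> Un_cv s 0.
Proof. intros Hg Hcv Hs e He.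
  set (eta := e / 3). assert (Heta : eta > 0) by (unfold eta; lra).
  destruct (tail_small q hq_sum eta Heta) as [N HN].
  destruct (unif_fin g (fun _ => 0) N eta Heta (fun m _ => Hcv m)) as [L0 HL0].
  exists L0. intros L HL. unfold R_dist.
  assert (Hb : forall M, Rabs (sum_f_R0 (fun m => q m * g L m) M - 0) <= eta + eta).
  { intros M. rewrite Rminus_0_r.
    replace (sum_f_R0 (fun m => q m * g L m) M) with (sumR (map (fun m => q m * g L m) (seq 1 M)))
      by (rewrite sumR_seq1, hq0; ring).
    assert (H0 : 0 <= sumR (map (fun m => q m * g L m) (seq 1 M))).
    { apply sumR_nonneg. intros. apply Rmult_le_pos; auto. apply Hg. }
    rewrite Rabs_right by lra.
    eapply Rle_trans. apply (sumR_le _ (fun m => eta * q m + (if Nat.leb m N then 0 else q m))).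
    { intros m Hm. apply in_seq in Hm. pose proof (hq_nonneg m). pose proof (Hg L m).
      destruct (Nat.leb m N) eqn:E.
      - apply Nat.leb_le in E. assert (Rabs (g L m - 0) < eta) by (apply HL0; lia).
        rewrite Rminus_0_r, Rabs_right in H2 by lra. nra.
      - nra. }
    rewrite sumR_plus, sumR_scal. pose proof (A_le q hq_nonneg hq0 hq_sum M). pose proof (tail_bd q hq_nonneg hq0 hq_sum N M).
    nra. }
  pose proof (lim_le _ _ _ _ _ (Hs L) (cv_const 0) Hb). unfold eta in *. lra. Qed.
End DCT.


Lemma sumn_nonneg f j : (forall l, 0 <= f l) -> 0 <= sumn f j.
Proof. intros H. induction j; simpl; [lra|]. pose proof (H j). lra. Qed.

Lemma ratio_bd V m : (m <= V)%nat -> 0 <= INR m / INR V <= 1.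
Proof. intros H. destruct V.
  - replace m with 0%nat by lia. simpl. unfold Rdiv. rewrite Rmult_0_l. lra.
  - assert (0 < INR (S V)) by (apply lt_0_INR; lia). assert (INR m <= INR (S V)) by (apply le_INR; auto).
    pose proof (pos_INR m). split. apply Rle_mult_inv_pos; lra.
    apply (Rmult_le_reg_r (INR (S V))); auto. unfold Rdiv. rewrite Rmult_assoc, Rinv_l by lra. lra. Qed.

Theorem mainTheorem4 (q : nat -> R) (p : R)
  (hq_nonneg : forall m, 0 <= q m)
  (hq0 : q 0%nat = 0)
  (hq_sum : infinite_sum q 1)
  (hp : 0 < p < 1) :
  exists Q : nat -> R,
    (forall j, infinite_sum (Qterm q p j) (Q j)) /\
    forall j : nat,
      (exists EW : nat -> R,
          (forall K, is_expect q p K (W j) (EW K)) /\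
          Un_cv (fun K => EW (S K) / INR (S K)) (Q j)) /\
      (exists Qplus : R,
          infinite_sum (fun l => Q (j + l)%nat) Qplus /\
          exists EWp : nat -> R,
            (forall K, is_expect q p K (Wplus j) (EWp K)) /\
            Un_cv (fun K => EWp (S K) / INR (S K)) Qplus).
Proof.
  assert (Hsn : forall m j, 0 <= sumn (pois p m) j <= 1).
  { intros. split; [apply sumn_nonneg; intros; apply pois_nonneg; lra| apply pois_sumn_le; lra]. }
  assert (Hp1 : forall m l, 0 <= pois p m l <= 1).
  { intros. pose proof (Hsn m (S l)). simpl in H. pose proof (Hsn m l). pose proof (pois_nonneg p hp m l). lra. }
  assert (HQb : forall j n, 0 <= Qterm q p j n <= q n).
  { intros j n. change (Qterm q p j n) with (q n * pois p n j). pose proof (Hp1 n j). pose proof (hq_nonneg n).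
    split; nra. }
  set (Q := fun j => proj1_sig (Rseries_CV_comp (Qterm q p j) q (HQb j) (exist _ 1 hq_sum))).
  assert (HQ : forall j, infinite_sum (Qterm q p j) (Q j)).
  { intros j. exact (proj2_sig (Rseries_CV_comp (Qterm q p j) q (HQb j) (exist _ 1 hq_sum))). }
  assert (HQ' : forall j, infinite_sum (fun m => q m * pois p m j) (Q j)) by exact HQ.
  exists Q. split; [exact HQ|]. intros j. split.
  - apply (main_gen q hq_nonneg hq0 hq_sum p (W j) (fun V m => Bin (ndraws p V) (INR m / INR V) j)
      (fun m => pois p m j) 1 (Q j)).
    + intros V m H. pose proof (Bin_bounds (ndraws p V) _ j (ratio_bd V m H)). rewrite Rabs_right; lra.
    + intros m. pose proof (Hp1 m j). rewrite Rabs_right; lra.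
    + intros vs Hv. apply cond_exp_W; auto.
    + intros m _. apply Bin_cv; auto.
    + exact (HQ' j).
  - assert (HFb : forall n, 0 <= q n * (1 - sumn (pois p n) j) <= q n).
    { intros n. pose proof (Hsn n j). pose proof (hq_nonneg n). split; nra. }
    set (Qplus := proj1_sig (Rseries_CV_comp _ q HFb (exist _ 1 hq_sum))).
    assert (HQp : infinite_sum (fun m => q m * (1 - sumn (pois p m) j)) Qplus)
      by exact (proj2_sig (Rseries_CV_comp _ q HFb (exist _ 1 hq_sum))).
    exists Qplus. split.
    + assert (HS : forall L, infinite_sum (fun m => q m * sumn (fun l => pois p m (j + l)%nat) L)
          (sumn (fun l => Q (j + l)%nat) L)).
      { induction L; simpl sumn.
        - apply (inf_sum_ext (fun _ => 0)); [intros; ring| apply inf_sum_zero].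
        - apply (inf_sum_ext (fun m => q m * sumn (fun l => pois p m (j + l)%nat) L + q m * pois p m (j + L)%nat)).
          { intros; ring. }
          apply inf_sum_plus; auto. }
      assert (Hs : forall L, infinite_sum (fun m => q m * (1 - sumn (pois p m) (j + L)))
          (Qplus - sumn (fun l => Q (j + l)%nat) L)).
      { intros L. apply (inf_sum_ext (fun m => q m * (1 - sumn (pois p m) j) - q m * sumn (fun l => pois p m (j + l)%nat) L)).
        { intros m. rewrite sumn_shift. ring. }
        apply inf_sum_minus; auto. }
      pose proof (dct q hq_nonneg hq0 hq_sum (fun L m => 1 - sumn (pois p m) (j + L)) (fun L => Qplus - sumn (fun l => Q (j + l)%nat) L)) as Hd.
      assert (Hd0 : Un_cv (fun L => Qplus - sumn (fun l => Q (j + l)%nat) L) 0).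
      { apply Hd; auto.
        - intros L m. pose proof (Hsn m (j + L)%nat). lra.
        - intros m. replace 0 with (1 - 1) by ring. apply CV_minus; [apply cv_const|].
          apply (cv_shift_add (fun N => sumn (pois p m) N)). apply pois_sumn_cv; auto. }
      unfold infinite_sum.
      apply (cv_ev _ (fun L => sumn (fun l => Q (j + l)%nat) (S L)) _ 0).
      { intros; rewrite sumn_sum_f; reflexivity. }
      apply cv_shift_inv.
      apply (cv_ev _ (fun L => Qplus - (Qplus - sumn (fun l => Q (j + l)%nat) L)) _ 0). { intros; ring. }
      pose proof (CV_minus _ _ _ _ (cv_const Qplus) Hd0) as Hm. rewrite Rminus_0_r in Hm. exact Hm.
    + apply (main_gen q hq_nonneg hq0 hq_sum p (Wplus j)
        (fun V m => 1 - sumn (fun l => Bin (ndraws p V) (INR m / INR V) l) j)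
        (fun m => 1 - sumn (pois p m) j) (1 + INR j) Qplus).
      * intros V m H. eapply Rle_trans; [apply Rabs_triang|]. rewrite Rabs_Ropp, Rabs_R1.
        apply Rplus_le_compat_l. apply sumn_abs_bd. intros l.
        pose proof (Bin_bounds (ndraws p V) _ l (ratio_bd V m H)). rewrite Rabs_right; lra.
      * intros m. pose proof (Hsn m j). pose proof (pos_INR j). rewrite Rabs_right; lra.
      * intros vs Hv. apply cond_exp_Wplus; auto.
      * intros m _. apply CV_minus; [apply cv_const|]. apply cv_sumn. intros l. apply Bin_cv; auto.
      * exact HQp.
Qed.
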